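(* Let $E[\mathscr{T}]$ be a stable locally $L^0$-convex module and let $E^\ast$ be the set of all continuous $L^0$-module morphisms $\mu:E\rightarrow L^0$. The collection of sets \[ U_{\{F_k\},\{A_k\},\varepsilon}:=\{x\in E\colon \sum 1_{A_k}\underset{\mu\in F_k}{\operatorname{ess\,sup}}|\mu(x)|<\varepsilon\}, \] where $\{A_k\}\in p(\Omega)$, $\{F_k\}$ is a countable collection of non-empty finite subsets of $E^\ast$ and $\varepsilon\in L^0$ with $\varepsilon>0$, is a neighborhood base of $0\in E$ for a stable locally $L^0$-convex topology (called the stable weak topology $\sigma_s(E,E^\ast)$).
   Context: $(\Omega,\Sigma,\mathbb{P})$ is a probability space, $L^0$ is the set of equivalence classes (modulo a.s. equality) of $\Sigma$-measurable real random variables, $\mathcal{F}$ is the associated measure algebra, and $p(\Omega)$ denotes the set of (countable) partitions of $\Omega$ in $\mathcal{F}$. An $L^0$-module $E$ has the countable concatenation property if for every sequence $\{x_k\}\subset E$ and every partition $\{A_k\}\in p(\Omega)$ there is a unique $x=\sum 1_{A_k}x_k\in E$ with $1_{A_k}x=1_{A_k}x_k$ for all $k$. A subset $S$ is stable if $\sum 1_{A_k}x_k\in S$ for all $\{x_k\}\subset S$, $\{A_k\}\in p(\Omega)$; a collection $\mathscr{C}$ of subsets is stable if each member is stable and $\sum 1_{A_k}S_k\in\mathscr{C}$ for all $\{S_k\}\subset\mathscr{C}$, $\{A_k\}\in p(\Omega)$. A stable locally $L^0$-convex module is a topological $L^0$-module with the countable concatenation property having a neighborhood base of $0$ which is a stable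 collection of $L^0$-convex, $L^0$-absorbing and $L^0$-balanced sets. $\operatorname{ess\,sup}$ denotes the essential supremum in $L^0$. *)

(* Defs.v *)
From HB Require Import structures.
From mathcomp Require Import all_boot all_order all_algebra.
From mathcomp Require Import all_classical all_reals all_analysis.
Set Implicit Arguments. Unset Strict Implicit. Unset Printing Implicit Defensive.
Import Order.TTheory GRing.Theory Num.Theory.
Local Open Scope classical_set_scope.
Local Open Scope ring_scope.

Section L0def.
Variables (d : measure_display) (T : measurableType d) (R : realType)
  (P : probability T R).

Definition aeq (f g : T -> R) : Prop := {ae P, forall t, f t = g t}.

(** L^0 = equivalence classes (mod a.s. equality) of measurable real functions *)
Definition L0class (f : T -> R) : set (T -> R) :=
  [set g | measurable_fun setT g /\ aeq f g].
Definition isL0class (C : set (T -> R)) : Prop :=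
  exists f, measurable_fun setT f /\ C = L0class f.
Definition L0 : Type := sig isL0class.

Definition rep (x : L0) : T -> R := proj1_sig (cid (proj2_sig x)).

Lemma L0class_is (f : T -> R) : measurable_fun setT f -> isL0class (L0class f).
Proof. by move=> mf; exists f. Qed.

(** the class of a function (of 0 if the function is not measurable) *)
Definition cls (f : T -> R) : L0 :=
  match pselect (measurable_fun setT f) with
  | left mf => exist _ _ (L0class_is mf)
  | right _ => exist _ _ (L0class_is (@measurable_cst _ _ T R setT 0))
  end.

Definition L0zero : L0 := cls (fun _ => 0).
Definition L0one : L0 := cls (fun _ => 1).
Definition L0add (x y : L0) : L0 := cls (fun t => rep x t + rep y t).
Definition L0opp (x : L0) : L0 := cls (fun t => - rep x t).
Definition L0mul (x y : L0) : L0 := cls (fun t => rep x t * rep y t).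
Definition L0abs (x : L0) : L0 := cls (fun t => `|rep x t|).
Definition L0ind (A : set T) : L0 := cls (\1_A).
Definition L0le (x y : L0) : Prop := {ae P, forall t, rep x t <= rep y t}.
Definition L0lt (x y : L0) : Prop := {ae P, forall t, rep x t < rep y t}.

Definition is_esssup (S : set L0) (s : L0) : Prop :=
  (forall y, S y -> L0le y s) /\
  (forall u, (forall y, S y -> L0le y u) -> L0le s u).

(** {A_k} in p(Omega): a countable partition of Omega in the measure algebra,
    given by representatives A_k in Sigma *)
Definition partition (A : nat -> set T) : Prop :=
  (forall k, measurable (A k)) /\
  (forall i j, i <> j -> P (A i `&` A j) = 0%E) /\
  P (\bigcup_k A k) = 1%E.

(** y = sum_k 1_{A_k} s_k in L^0 *)
Definition concatL0 (A : nat -> set T) (s : nat -> L0) (y : L0) : Prop :=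
  forall k, L0mul (L0ind (A k)) y = L0mul (L0ind (A k)) (s k).

Definition L0nbhd (r : L0) (N : set L0) : Prop :=
  exists eps, L0lt L0zero eps /\ [set s | L0le (L0abs (L0add s (L0opp r))) eps] `<=` N.

Record L0module := {
  Ecar :> Type;
  e0 : Ecar;
  eadd : Ecar -> Ecar -> Ecar;
  eopp : Ecar -> Ecar;
  esmul : L0 -> Ecar -> Ecar;
  eaddA : forall x y z, eadd x (eadd y z) = eadd (eadd x y) z;
  eaddC : forall x y, eadd x y = eadd y x;
  eadd0 : forall x, eadd e0 x = x;
  eaddN : forall x, eadd (eopp x) x = e0;
  esmulA : forall r s x, esmul (L0mul r s) x = esmul r (esmul s x);
  esmul1 : forall x, esmul L0one x = x;
  esmulDr : forall r x y, esmul r (eadd x y) = eadd (esmul r x) (esmul r y);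
  esmulDl : forall r s x, esmul (L0add r s) x = eadd (esmul r x) (esmul s x)
}.

Section Module.
Variable M : L0module.

(** z = sum_k 1_{A_k} x_k in E *)
Definition concatE (A : nat -> set T) (x : nat -> M) (z : M) : Prop :=
  forall k, esmul (L0ind (A k)) z = esmul (L0ind (A k)) (x k).

Definition ccp : Prop :=
  forall (A : nat -> set T) (x : nat -> M), partition A ->
    exists! z, concatE A x z.

Definition stable_set (S : set M) : Prop :=
  forall (A : nat -> set T) (x : nat -> M) z, partition A ->
    (forall k, S (x k)) -> concatE A x z -> S z.

Definition concat_sets (A : nat -> set T) (S : nat -> set M) : set M :=
  [set z | exists x : nat -> M, (forall k, S k (x k)) /\ concatE A x z].

Definition stable_collection (C : set (set M)) : Prop :=
  (forall S, C S -> stable_set S) /\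
  (forall (A : nat -> set T) (S : nat -> set M), partition A ->
     (forall k, C (S k)) -> C (concat_sets A S)).

Definition is_topology (tau : set (set M)) : Prop :=
  tau setT /\
  (forall F : set (set M), F `<=` tau -> tau (\bigcup_(U in F) U)) /\
  (forall U V, tau U -> tau V -> tau (U `&` V)).

Definition nbhd (tau : set (set M)) (x : M) (N : set M) : Prop :=
  exists O, tau O /\ O x /\ O `<=` N.

Definition nbhd_base (tau : set (set M)) (x : M) (B : set (set M)) : Prop :=
  (forall U, B U -> nbhd tau x U) /\
  (forall N, nbhd tau x N -> exists2 U, B U & U `<=` N).

Definition topological_L0module (tau : set (set M)) : Prop :=
  is_topology tau /\
  (forall x y W, nbhd tau (eadd x y) W ->
     exists U V, nbhd tau x U /\ nbhd tau y V /\
       forall u v, U u -> V v -> W (eadd u v)) /\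
  (forall r x W, nbhd tau (esmul r x) W ->
     exists N V, L0nbhd r N /\ nbhd tau x V /\
       forall s z, N s -> V z -> W (esmul s z)).

Definition L0convex (C : set M) : Prop :=
  forall x y lam, C x -> C y -> L0le L0zero lam -> L0le lam L0one ->
    C (eadd (esmul lam x) (esmul (L0add L0one (L0opp lam)) y)).

Definition L0absorbing (C : set M) : Prop :=
  forall x, exists lam, L0lt L0zero lam /\ exists2 c, C c & x = esmul lam c.

Definition L0balanced (C : set M) : Prop :=
  forall x lam, C x -> L0le (L0abs lam) L0one -> C (esmul lam x).

Definition stable_locally_L0convex (tau : set (set M)) : Prop :=
  topological_L0module tau /\ ccp /\
  exists B : set (set M), nbhd_base tau (e0 M) B /\ stable_collection B /\
    forall U, B U -> [/\ L0convex U, L0absorbing U & L0balanced U].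

Definition dual (tau : set (set M)) : set (M -> L0) :=
  [set mu | (forall x y, mu (eadd x y) = L0add (mu x) (mu y)) /\
            (forall r x, mu (esmul r x) = L0mul r (mu x)) /\
            (forall x N, L0nbhd (mu x) N -> nbhd tau x [set y | N (mu y)])].

Definition Uweak (F : nat -> set (M -> L0)) (A : nat -> set T) (eps : L0) : set M :=
  [set x | exists s : nat -> L0,
     (forall k, is_esssup [set L0abs (mu x) | mu in F k] (s k)) /\
     exists y, concatL0 A s y /\ L0lt y eps].

Definition weak_base (tau : set (set M)) : set (set M) :=
  [set U | exists (F : nat -> set (M -> L0)) (A : nat -> set T) (eps : L0),
     [/\ partition A,
         (forall k, [/\ F k `<=` dual tau, finite_set (F k) & F k !=set0]),
         L0lt L0zero eps &
         U = Uweak F A eps]].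

End Module.
End L0def.

(* Main.v *)
Require Import Defs.
From HB Require Import structures.
From mathcomp Require Import all_boot all_order all_algebra finmap.
From mathcomp Require Import all_classical all_reals all_analysis.
Require Import Defs.
From mathcomp Require Import measurable_realfun.
From Stdlib Require Cantor.
From mathcomp Require Import ring lra.
Set Implicit Arguments. Unset Strict Implicit. Unset Printing Implicit Defensive.
Import Order.TTheory GRing.Theory Num.Theory.
Local Open Scope classical_set_scope.
Local Open Scope ring_scope.
Section Pt.
Variable R : realType.
Lemma pt_smul (S Rr a b D G hv : R) : `|S - Rr| <= D -> `|a| <= G -> `|b| <= hv ->
  `|S * (a + b) - Rr * a| <= D * Num.max G 0 + (`|Rr| + D) * Num.max hv 0.
Proof.
move=> h1 h2 h3.
have -> : S * (a + b) - Rr * a = (S - Rr) * a + S * b by ring.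
apply: le_trans (ler_normD _ _) _; rewrite !normrM; apply: lerD.
  apply: ler_pM => //; apply: le_trans h2 _; by rewrite le_max lexx.
apply: ler_pM => //.
  have -> : S = Rr + (S - Rr) by ring.
  by apply: le_trans (ler_normD _ _) _; rewrite lerD2l.
by apply: le_trans h3 _; rewrite le_max lexx.
Qed.

Lemma pt_smul_lt (e G Rr hv : R) : 0 < e -> hv < e / (2 * (`|Rr| + 2)) ->
  Num.min 1 (e / (2 * (Num.max G 0 + 1))) * Num.max G 0 +
  (`|Rr| + Num.min 1 (e / (2 * (Num.max G 0 + 1)))) * Num.max hv 0 < e.
Proof.
move=> he hh.
set G' := Num.max G 0; set D := Num.min 1 _; set H := Num.max hv 0.
have G0 : 0 <= G' by rewrite le_max lexx orbT.
have H0 : 0 <= H by rewrite le_max lexx orbT.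
have r0 : 0 <= `|Rr| by [].
have D1 : D <= 1 by rewrite ge_min lexx.
have D0 : 0 < D by rewrite lt_min ltr01 /= divr_gt0 // mulr_gt0 //; lra.
have De : D * (2 * (G' + 1)) <= e.
  rewrite -ler_pdivlMr; last lra.
  by rewrite ge_min lexx orbT.
have eta0 : 0 < e / (2 * (`|Rr| + 2)) by rewrite divr_gt0 //; lra.
have He : H < e / (2 * (`|Rr| + 2)) by rewrite gt_max hh eta0.
have He' : H * (2 * (`|Rr| + 2)) < e by rewrite -ltr_pdivlMr; last lra.
nra.
Qed.

Lemma pt_abs_lt (e G : R) : 0 < e ->
  e / (2 * (Num.max G 0 + 1)) * Num.max G 0 < e.
Proof.
move=> he; set G' := Num.max G 0.
have G0 : 0 <= G' by rewrite le_max lexx orbT.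
have q : e / (2 * (G' + 1)) * (2 * (G' + 1)) = e by rewrite divfK //; apply/eqP; lra.
have q0 : 0 < e / (2 * (G' + 1)) by rewrite divr_gt0 //; lra.
nra.
Qed.

Lemma pt_inv1 (e G : R) : 0 < e ->
  2 * (Num.max G 0 + 1) / e * (e / (2 * (Num.max G 0 + 1))) = 1.
Proof.
move=> he; set G' := Num.max G 0.
have G0 : 0 <= G' by rewrite le_max lexx orbT.
rewrite mulrA divfK; last by apply/eqP; lra.
by rewrite mulfV //; apply/eqP; lra.
Qed.

Lemma pt_conv (l a b ha hb : R) : 0 <= l -> l <= 1 -> `|a| <= ha -> `|b| <= hb ->
  `|l * a + (1 - l) * b| <= l * ha + (1 - l) * hb.
Proof.
move=> l0 l1 h1 h2; apply: le_trans (ler_normD _ _) _; rewrite !normrM.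
rewrite (ger0_norm l0) (ger0_norm (_ : 0 <= 1 - l)); last lra.
apply: lerD; apply: ler_wpM2l => //; lra.
Qed.

Lemma pt_conv_lt (l ha hb e : R) : 0 <= l -> l <= 1 -> ha < e -> hb < e ->
  l * ha + (1 - l) * hb < e.
Proof.
move=> l0 l1 h1 h2; have [lt1|ge1] := ltP l 1; first nra.
have -> : l = 1 by apply/eqP; rewrite eq_le l1 ge1.
lra.
Qed.
End Pt.

Section Basic.
Context (d : measure_display) (T : measurableType d) (R : realType) (P : probability T R).
Local Notation L0 := (L0 P).
Local Notation ae Q := ({ae P, forall t, Q t}).

Lemma repM (x : L0) : measurable_fun setT (rep x) /\ proj1_sig x = L0class P (rep x).
Proof. rewrite /rep; case: (cid _) => f [mf e] /=; by []. Qed.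

Lemma rep_meas (x : L0) : measurable_fun setT (rep x).
Proof. by case: (repM x). Qed.

Lemma L0_ext (x y : L0) : ae (fun t => rep x t = rep y t) -> x = y.
Proof.
move=> H; have [_ ex] := repM x; have [_ ey] := repM y.
have e : proj1_sig x = proj1_sig y.
  rewrite ex ey /L0class; apply/seteqP; split => g [mg hg]; split => //.
  - by rewrite /aeq; apply: filterS2 hg H => t a b; congruence.
  - by rewrite /aeq; apply: filterS2 hg H => t a b; congruence.

move: x y e {H ex ey} => [x px] [y py] /= e; subst y.
by rewrite (Prop_irrelevance px py).
Qed.

Lemma aeI (Q1 Q2 : T -> Prop) : ae Q1 -> ae Q2 -> ae (fun t => Q1 t /\ Q2 t).
Proof. by move=> h1 h2; apply: filterS2 h1 h2 => t a b. Qed.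

Lemma aeS (Q1 Q2 : T -> Prop) : (forall t, Q1 t -> Q2 t) -> ae Q1 -> ae Q2.
Proof. by move=> h; apply: filterS. Qed.

Lemma aeT (Q : T -> Prop) : (forall t, Q t) -> ae Q.
Proof. by move=> h; apply: aeW. Qed.

Lemma rep_cls (f : T -> R) : measurable_fun setT f -> ae (fun t => rep (cls P f) t = f t).
Proof.
move=> mf; rewrite /cls; case: pselect => // mf'.
rewrite /rep /=; case: cid => g [mg e] /=.
have : L0class P g g by split => //; apply: aeT.
by rewrite -e => -[_ h]; apply: filterS h => t ->.
Qed.

Lemma ae_nat (Q : nat -> T -> Prop) : (forall n, ae (Q n)) -> ae (fun t => forall n, Q n t).
Proof. exact: ae_foralln. Qed.

Lemma ae_count (I : Type) (S : set I) (Q : I -> T -> Prop) : countable S ->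
  (forall i, S i -> ae (Q i)) -> ae (fun t => forall i, S i -> Q i t).
Proof.
move=> /countable_injP[f finj] h.
have : ae (fun t => forall n, forall i, S i -> f i = n -> Q i t).
  apply: ae_nat => n.
  have [[i [Si fi]]|nex] := pselect (exists i, S i /\ f i = n).
    apply: filterS (h i Si) => t qi j Sj fj.
    have -> : j = i by apply: finj; rewrite ?inE //; congruence.
    exact: qi.
  apply: aeT => t i Si fi; exfalso; apply: nex; by exists i.
by apply: filterS => t H i Si; exact: H _ _ Si erefl.
Qed.


Lemma mD (f g : T -> R) : measurable_fun setT f -> measurable_fun setT g ->
  measurable_fun setT (fun t => f t + g t).
Proof. by move=> mf mg; apply: measurable_funD. Qed.
Lemma mM (f g : T -> R) : measurable_fun setT f -> measurable_fun setT g ->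
  measurable_fun setT (fun t => f t * g t).
Proof. by move=> mf mg; apply: measurable_funM. Qed.
Lemma mN (f : T -> R) : measurable_fun setT f -> measurable_fun setT (fun t => - f t).
Proof. by move=> mf; apply: measurable_funN. Qed.
Lemma mA (f : T -> R) : measurable_fun setT f -> measurable_fun setT (fun t => `|f t|).
Proof. by move=> mf; apply: measurableT_comp => //; exact: normr_measurable. Qed.
Lemma mC (c : R) : measurable_fun setT (fun _ : T => c).
Proof. exact: measurable_cst. Qed.
Lemma mMax (f g : T -> R) : measurable_fun setT f -> measurable_fun setT g ->
  measurable_fun setT (fun t => Num.max (f t) (g t)).
Proof. by move=> mf mg; apply: measurable_maxr. Qed.
Lemma mMin (f g : T -> R) : measurable_fun setT f -> measurable_fun setT g ->
  measurable_fun setT (fun t => Num.min (f t) (g t)).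
Proof. by move=> mf mg; apply: measurable_minr. Qed.
Lemma mI (A : set T) : measurable A -> measurable_fun setT (\1_A : T -> R).
Proof. by move=> mA; apply: measurable_indic. Qed.
Lemma mV (f : T -> R) : measurable_fun setT f -> measurable_fun setT (fun t => (f t)^-1).
Proof.
move=> mf; apply: measurableT_comp => //.
have -> : [set: R] = [set x : R | x != 0] `|` [set 0].
  by apply/seteqP; split => x //= _; case: (eqVneq x 0) => [->|h]; [right|left].
apply/measurable_funU => //.
- apply: open_measurable; rewrite (_ : [set x : R | x != 0] = ~` [set 0]).
    rewrite openC; exact: closed_eq.
  by apply/seteqP; split => x /=; move/eqP.
- split; last exact: measurable_fun_set1.
  apply: open_continuous_measurable_fun.
  + rewrite (_ : [set x : R | x != 0] = ~` [set 0]).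
      rewrite openC; exact: closed_eq.
    by apply/seteqP; split => x /=; move/eqP.
  + by move=> x; rewrite inE => /= hx; apply: inv_continuous.
Qed.

Ltac meas := repeat first [ apply: rep_meas | apply: mC | apply: mI | apply: mD | apply: mM | apply: mN | apply: mA | apply: mMax | apply: mMin | apply: mV | done ].

Lemma rep_add (x y : L0) : ae (fun t => rep (L0add x y) t = rep x t + rep y t).
Proof. by apply: rep_cls; apply: mD; apply: rep_meas. Qed.
Lemma rep_opp (x : L0) : ae (fun t => rep (L0opp x) t = - rep x t).
Proof. by apply: rep_cls; apply: mN; apply: rep_meas. Qed.
Lemma rep_mul (x y : L0) : ae (fun t => rep (L0mul x y) t = rep x t * rep y t).
Proof. by apply: rep_cls; apply: mM; apply: rep_meas. Qed.
Lemma rep_abs (x : L0) : ae (fun t => rep (L0abs x) t = `|rep x t|).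
Proof. by apply: rep_cls; apply: mA; apply: rep_meas. Qed.
Lemma rep_zero : ae (fun t => rep (L0zero P) t = 0).
Proof. by apply: rep_cls; apply: mC. Qed.
Lemma rep_one : ae (fun t => rep (L0one P) t = 1).
Proof. by apply: rep_cls; apply: mC. Qed.
Lemma rep_ind (A : set T) : measurable A -> ae (fun t => rep (L0ind P A) t = \1_A t).
Proof. by move=> mA; apply: rep_cls; apply: mI. Qed.

Lemma indE (A : set T) t : (\1_A t : R) = if `[< A t >] then 1 else 0.
Proof. rewrite /indic; case: asboolP => h; first by rewrite mem_set.
by rewrite memNset. Qed.

Lemma indic_in (A : set T) t : A t -> (\1_A t : R) = 1.
Proof. by move=> h; rewrite indE; case: asboolP. Qed.
Lemma indic_out (A : set T) t : ~ A t -> (\1_A t : R) = 0.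
Proof. by move=> h; rewrite indE; case: asboolP. Qed.

Lemma ae_null (N : set T) (Q : T -> Prop) : measurable N -> P N = 0%E ->
  (forall t, ~ N t -> Q t) -> ae Q.
Proof.
move=> mN PN h; exists N; split => // t /= nq; apply: contrapT => nN; apply: nq; exact: h.
Qed.

Lemma ae_full (N : set T) (Q : T -> Prop) : measurable N -> P N = 1%E ->
  (forall t, N t -> Q t) -> ae Q.
Proof.
move=> mN PN h; apply: (@ae_null (~` N)); first exact: measurableC.
  by rewrite probability_setC // PN subee.
by move=> t /contrapT; apply: h.
Qed.

Lemma part_meas A : Defs.partition P A -> forall k, measurable (A k).
Proof. by case. Qed.

Lemma part_cover A : Defs.partition P A -> ae (fun t => exists k, A k t).
Proof.
move=> [mA [_ h1]]; apply: (ae_full _ h1) => //.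
by apply: bigcupT_measurable.
by move=> t [k _ h]; exists k.
Qed.

Lemma part_disj A : Defs.partition P A ->
  ae (fun t => forall i j, i <> j -> A i t -> A j t -> False).
Proof.
move=> [mA [h0 _]]; apply: ae_nat => i; apply: ae_nat => j.
have [->|ij] := eqVneq i j; first by apply: aeT.
apply: (@ae_null (A i `&` A j)); first exact: measurableI.
  by apply: h0; apply/eqP.
by move=> t nt _ a b; apply: nt.
Qed.

Lemma part_intro A : (forall k, measurable (A k)) ->
  (forall i j, i <> j -> P (A i `&` A j) = 0%E) -> ae (fun t => exists k, A k t) ->
  Defs.partition P A.
Proof.
move=> mA h0 [N [mN PN sN]]; split => //; split => //.
have mU : measurable (\bigcup_k A k) by exact: bigcupT_measurable.
apply/eqP; rewrite eq_le; apply/andP; split; first by apply: probability_le1.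
have : (P (~` N) <= P (\bigcup_k A k))%E.
  apply: le_measure; rewrite ?inE //; first exact: measurableC.
  move=> t /= nN; apply: contrapT => nU; apply: nN; apply: sN => /= -[k]; move=> Ak.
  by apply: nU; exists k.
by rewrite probability_setC // PN sube0.
Qed.

Lemma concat_char A (s : nat -> L0) (y : L0) : Defs.partition P A -> concatL0 A s y ->
  ae (fun t => forall k, A k t -> rep y t = rep (s k) t).
Proof.
move=> pA hc; apply: ae_nat => k.
have e := f_equal (@rep d T R P) (hc k).
have := aeI (rep_mul (L0ind P (A k)) y) (aeI (rep_mul (L0ind P (A k)) (s k))
   (rep_ind (part_meas pA k))).
apply: filterS => t [h1 [h2 h3]] Akt.
move: h1 h2; rewrite e => ->; rewrite h3 indic_in // !mul1r //.
Qed.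

Lemma seqDU_sub (F : nat -> set T) k : seqDU F k `<=` F k.
Proof. by move=> t []. Qed.

Lemma concat_ex A (s : nat -> L0) : Defs.partition P A -> exists y, concatL0 A s y.
Proof.
move=> pA; have mA := part_meas pA.
pose A' k := if k is 0 then A 0 `|` ~` (\bigcup_j A j) else A k.
have mA' : forall k, measurable (A' k).
  case => [|k] //=; apply: measurableU => //; apply: measurableC.
  exact: bigcupT_measurable.
pose D := seqDU A'.
have mD : forall k, measurable (D k) by exact: seqDU_measurable.
have cov : forall t, exists k, D k t.
  move=> t; have : (\bigcup_k A' k) t.
    have [[j _ h]|nh] := pselect ((\bigcup_j A j) t).
      by exists j => //; case: j h => [|j] h //=; left.
    by exists 0%N => //=; right.
  by rewrite seqDU_bigcup_eq => -[k _ h]; exists k.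
have uniq : forall t i j, D i t -> D j t -> i = j.
  move=> t i j hi hj; apply: (@trivIset_seqDU _ A') => //; by exists t.
pose kk t := proj1_sig (cid (cov t)).
have kkP : forall t, D (kk t) t by move=> t; rewrite /kk; case: cid.
pose f t := rep (s (kk t)) t.
have mf : measurable_fun setT f.
  have -> : [set: T] = \bigcup_k D k.
    by apply/seteqP; split => t // _; have [k h] := cov t; exists k.
  apply/measurable_fun_bigcup => // k.
  apply: (@eq_measurable_fun _ _ _ _ (D k) (rep (s k))).
    by move=> t; rewrite inE => hk; rewrite /f (uniq t _ _ (kkP t) hk).
  apply: measurable_funS (rep_meas (s k)) => //.
exists (cls P f) => k; apply: L0_ext.
have := aeI (rep_mul (L0ind P (A k)) (cls P f)) (aeI (rep_mul (L0ind P (A k)) (s k))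
   (aeI (rep_ind (mA k)) (aeI (rep_cls mf) (part_disj pA)))).
apply: filterS => t [-> [-> [-> [-> hd]]]].
have [Akt|nAkt] := pselect (A k t); last by rewrite indic_out // !mul0r.
congr (_ * _); rewrite /f.
have h := kkP t; have : A' (kk t) t by exact: seqDU_sub h.
case Ek : (kk t) => [|j] /=.
  case => [h0|hn]; last by exfalso; apply: hn; exists k.
  case: k Akt => // k Akt; exfalso; exact: (hd 0%N k.+1).
move=> hj; have [->|jk] := eqVneq j.+1 k => //.
by exfalso; apply: (hd j.+1 k) => //; apply/eqP.
Qed.

Definition L0max (x y : L0) := cls P (fun t => Num.max (rep x t) (rep y t)).
Lemma rep_max (x y : L0) : ae (fun t => rep (L0max x y) t = Num.max (rep x t) (rep y t)).
Proof. by apply: rep_cls; apply: mMax; apply: rep_meas. Qed.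

Lemma L0le_refl (x : L0) : L0le x x.
Proof. by apply: aeT. Qed.
Lemma L0le_trans (x y z : L0) : L0le x y -> L0le y z -> L0le x z.
Proof. by move=> h1 h2; apply: filterS2 h1 h2 => t; apply: le_trans. Qed.

Lemma esssup_seq (l : seq {classic L0}) : l != [::] ->
  exists s, is_esssup [set y | y \in l] s.
Proof.
elim: l => // a l IH _.
have [->|nl] := eqVneq l [::].
  exists a; split.
    by move=> y /=; rewrite inE => /eqP ->; apply: L0le_refl.
  by move=> u hu; apply: hu; rewrite /= inE.
have [s [s1 s2]] := IH nl.
exists (L0max a s); split.
  move=> y /=; rewrite inE => /orP [/eqP ->|yl].
    by apply: filterS (rep_max a s) => t ->; rewrite le_max lexx.
  apply: L0le_trans (s1 y yl) _.
  by apply: filterS (rep_max a s) => t ->; rewrite le_max lexx orbT.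
move=> u hu.
have ha : L0le a u by apply: hu; rewrite /= inE eqxx.
have hs : L0le s u by apply: s2 => y yl; apply: hu; rewrite /= inE yl orbT.
apply: filterS (aeI (rep_max a s) (aeI ha hs)) => t [-> [h1 h2]].
by rewrite ge_max h1 h2.
Qed.

Lemma esssup_ex (S : set L0) : finite_set S -> S !=set0 -> exists s, is_esssup S s.
Proof.
move=> /(@finite_fsetP {classic L0}) [X eX] [y0 Sy0].
have : (finmap.enum_fset X) != [::].
  apply/eqP => e; move: Sy0; rewrite eX /=.
  by rewrite -[_ \in X]/(y0 \in (finmap.enum_fset X)) e.
move=> /esssup_seq [s hs]; exists s.
suff -> : S = [set y | y \in (finmap.enum_fset X)] by [].
by rewrite eX.
Qed.

Section Mod.
Variable M : L0module P.

Definition lin (mu : M -> L0) :=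
  (forall x y, mu (eadd x y) = L0add (mu x) (mu y)) /\
  (forall r x, mu (esmul r x) = L0mul r (mu x)).

Lemma dual_lin tau mu : dual tau mu -> lin mu.
Proof. by case=> [h1 [h2 _]]; split. Qed.

Lemma lin_add mu a b : lin mu ->
  ae (fun t => rep (mu (eadd a b)) t = rep (mu a) t + rep (mu b) t).
Proof. by case=> h _; rewrite h; apply: rep_add. Qed.

Lemma lin_smul mu r a : lin mu ->
  ae (fun t => rep (mu (esmul r a)) t = rep r t * rep (mu a) t).
Proof. by case=> _ h; rewrite h; apply: rep_mul. Qed.

Lemma lin_zero mu : lin mu -> ae (fun t => rep (mu (e0 M)) t = 0).
Proof.
move=> hl; have := lin_add (e0 M) (e0 M) hl; rewrite eadd0.
apply: filterS => t h; apply/esym; apply: (@addrI _ (rep (mu (e0 M)) t)).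
by rewrite addr0 -h.
Qed.

Lemma lin_opp mu a : lin mu -> ae (fun t => rep (mu (eopp a)) t = - rep (mu a) t).
Proof.
move=> hl; have := aeI (lin_add (eopp a) a hl) (lin_zero hl); rewrite eaddN.
apply: filterS => t [h1 h2]; apply/eqP; rewrite -subr_eq0 opprK -h1 h2 //.
Qed.

Definition bnd (F : nat -> set (M -> L0)) (A : nat -> set T) (z : M) (h : T -> R) :=
  forall k, ae (fun t => A k t -> forall mu, F k mu -> `|rep (mu z) t| <= h t).

Definition finF (F : nat -> set (M -> L0)) := forall k, finite_set (F k) /\ F k !=set0.

Lemma esssup_bnd (F : nat -> set (M -> L0)) z (s : nat -> L0) :
  finF F -> (forall k, is_esssup [set L0abs (mu z) | mu in F k] (s k)) ->
  forall k, ae (fun t => forall mu, F k mu -> `|rep (mu z) t| <= rep (s k) t).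
Proof.
move=> fF hs k; apply: (ae_count (S := F k) (Q := fun mu t => `|rep (mu z) t| <= rep (s k) t)).
  by apply: finite_set_countable; case: (fF k).
move=> mu Fmu; have : L0le (L0abs (mu z)) (s k) by apply: (hs k).1; exists mu.
by move=> h; apply: filterS2 h (rep_abs (mu z)) => t h1 h2; rewrite -h2.
Qed.

Lemma Uw_elim F A eps z : Defs.partition P A -> finF F -> Uweak F A eps z ->
  exists h : L0, bnd F A z (rep h) /\ L0lt h eps.
Proof.
move=> pA fF [s [hs [y [hy lt]]]]; exists y; split => // k.
apply: filterS2 (concat_char pA hy) (esssup_bnd fF hs k) => t h1 h2 Akt mu Fmu.
by rewrite (h1 k) //; apply: h2.
Qed.

Lemma esssups_ex F z : finF F -> exists s : nat -> L0,
  forall k, is_esssup [set L0abs (mu z) | mu in F k] (s k).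
Proof.
move=> fF; have h : forall k, exists s, is_esssup [set L0abs (mu z) | mu in F k] s.
  move=> k; have [f1 [mu1 m1]] := fF k; apply: esssup_ex.
    exact: finite_image.
  by exists (L0abs (mu1 z)); exists mu1.
by exists (fun k => proj1_sig (cid (h k))) => k; case: cid.
Qed.

Lemma gauge_ex F A z : Defs.partition P A -> finF F -> exists G : L0, bnd F A z (rep G).
Proof.
move=> pA fF; have [s hs] := esssups_ex z fF.
have [y hy] := concat_ex s pA; exists y => k.
apply: filterS2 (concat_char pA hy) (esssup_bnd fF hs k) => t h1 h2 Akt mu Fmu.
by rewrite (h1 k) //; apply: h2.
Qed.

Lemma Uw_intro F A eps z (h : L0) : Defs.partition P A -> finF F ->
  bnd F A z (rep h) -> L0lt h eps -> Uweak F A eps z.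
Proof.
move=> pA fF hb hlt; have [s hs] := esssups_ex z fF.
have [y hy] := concat_ex s pA.
exists s; split => //; exists y; split => //.
have hk : forall k, ae (fun t => A k t -> rep (s k) t <= rep h t).
  move=> k; have mAk := part_meas pA k.
  pose u := cls P (fun t => \1_(A k) t * rep h t + (1 - \1_(A k) t) * rep (s k) t).
  have ru : ae (fun t => rep u t = \1_(A k) t * rep h t + (1 - \1_(A k) t) * rep (s k) t).
    by apply: rep_cls; meas.
  have : L0le (s k) u.
    apply: (hs k).2 => _ [mu Fmu <-].
    have : L0le (L0abs (mu z)) (s k) by apply: (hs k).1; exists mu.
    move=> h1; apply: filterS (aeI h1 (aeI (rep_abs (mu z)) (aeI ru (hb k)))).
    move=> t [h1' [h2 [h3 h4]]]; rewrite h3.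
    have [Akt|nAkt] := pselect (A k t).
      by rewrite indic_in // subrr mul0r addr0 mul1r h2; apply: h4.
    by rewrite indic_out // mul0r add0r subr0 mul1r.
  by move=> h2; apply: filterS2 h2 ru => t h3 h4 Akt; rewrite h4 indic_in // in h3; rewrite subrr mul0r addr0 mul1r in h3.
apply: filterS (aeI (ae_nat hk) (aeI (concat_char pA hy) (aeI (part_cover pA) hlt))).
move=> t [h1 [h2 [[k Akt] h4]]].
by rewrite (h2 k) //; apply: le_lt_trans h4; apply: h1.
Qed.

End Mod.
End Basic.

Section Top.
Context (d : measure_display) (T : measurableType d) (R : realType) (P : probability T R).
Context (M : L0module P) (tau : set (set M)).
Local Notation L0 := (L0 P).
Local Notation ae Q := ({ae P, forall t, Q t}).
Ltac meas := repeat first [ apply: rep_meas | apply: mC | apply: mI | apply: mD | apply: mM | apply: mN | apply: mA | apply: mMax | apply: mMin | apply: mV | done ].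

Definition Bs := weak_base tau.

Lemma baseP U : Bs U -> exists F A (eps : L0), [/\ Defs.partition P A, finF F,
  (forall k, F k `<=` dual tau), L0lt (L0zero P) eps & U = Uweak F A eps].
Proof.
move=> [F [A [eps [pA hF heps ->]]]]; exists F, A, eps; split => //.
- by move=> k; have [? ? ?] := hF k.
- by move=> k; have [? ? ?] := hF k.
Qed.

Lemma base_intro F A (eps : L0) : Defs.partition P A -> finF F ->
  (forall k, F k `<=` dual tau) -> L0lt (L0zero P) eps -> Bs (Uweak F A eps).
Proof.
move=> pA fF sF he; exists F, A, eps; split => // k.
by have [? ?] := fF k; split.
Qed.

Lemma pos_rep (eps : L0) : L0lt (L0zero P) eps -> ae (fun t => 0 < rep eps t).
Proof. by rewrite /L0lt => h; apply: filterS2 h (@rep_zero _ _ _ P) => t h1 h2; rewrite -h2. Qed.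

Lemma pos_intro (eps : L0) : ae (fun t => 0 < rep eps t) -> L0lt (L0zero P) eps.
Proof. by rewrite /L0lt => h; apply: filterS2 h (@rep_zero _ _ _ P) => t h1 h2; rewrite h2. Qed.

Lemma bnd_of (F : nat -> set (M -> L0)) A z (h : T -> R) : finF F ->
  (forall k mu, F k mu -> dual tau mu ->
     ae (fun t => A k t -> `|rep (mu z) t| <= h t)) ->
  (forall k, F k `<=` dual tau) -> bnd F A z h.
Proof.
move=> fF H sF k.
have h1 := @ae_count _ _ _ P _ (F k) (fun mu t => A k t -> `|rep (mu z) t| <= h t)
  (finite_set_countable (fF k).1) (fun mu Fmu => H k mu Fmu (sF k mu Fmu)).
by apply: filterS h1 => t h2 Akt mu Fmu; apply: h2.
Qed.

Lemma zero_in U : Bs U -> U (e0 M).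
Proof.
move=> /baseP [F [A [eps [pA fF sF he ->]]]].
apply: (@Uw_intro _ _ _ _ _ _ _ _ _ (L0zero P)) => //.
  apply: bnd_of => // k mu _ /dual_lin hl.
  by apply: filterS2 (lin_zero hl) (@rep_zero _ _ _ P) => t -> -> _; rewrite normr0.
Qed.

Lemma half U : Bs U -> exists2 V, Bs V & forall a b, V a -> V b -> U (eadd a b).
Proof.
move=> /baseP [F [A [eps [pA fF sF he ->]]]].
pose e2 := cls P (fun t => rep eps t / 2).
have re2 : ae (fun t => rep e2 t = rep eps t / 2) by apply: rep_cls; meas.
have he2 : L0lt (L0zero P) e2.
  apply: pos_intro; apply: filterS2 re2 (pos_rep he) => t -> h; lra.
exists (Uweak F A e2); first exact: base_intro.
move=> a b /(Uw_elim pA fF) [ha [ba la]] /(Uw_elim pA fF) [hb [bb lb]].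
apply: (@Uw_intro _ _ _ _ _ _ _ _ _ (L0add ha hb)) => //.
  apply: bnd_of => // k mu Fmu /dual_lin hl.
  apply: filterS (aeI (ba k) (aeI (bb k) (aeI (lin_add a b hl) (rep_add ha hb)))).
  move=> t [h1 [h2 [h3 h4]]] Akt; rewrite h3 h4.
  apply: le_trans (ler_normD _ _) _; apply: lerD; [exact: h1 | exact: h2].
apply: filterS (aeI la (aeI lb (aeI re2 (rep_add ha hb)))) => t [h1 [h2 [h3 h4]]].
rewrite h4; rewrite h3 in h1 h2; lra.
Qed.


Definition pc (A1 : nat -> set T) (A2 : nat -> nat -> set T) (n : nat) : set T :=
  A1 (Cantor.of_nat n).1 `&` A2 (Cantor.of_nat n).1 (Cantor.of_nat n).2.

Lemma part_pair A1 A2 : Defs.partition P A1 -> (forall i, Defs.partition P (A2 i)) ->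
  Defs.partition P (pc A1 A2).
Proof.
move=> p1 p2; apply: part_intro.
- move=> n; apply: measurableI; [exact: (part_meas p1) | exact: (part_meas (p2 _))].
- move=> n m nm; rewrite /pc.
  case E1 : (Cantor.of_nat n) => [i j]; case E2 : (Cantor.of_nat m) => [i' j'] /=.
  have mC : forall i j, measurable (A1 i `&` A2 i j).
    by move=> a b; apply: measurableI; [exact: (part_meas p1) | exact: (part_meas (p2 _))].
  have [ii|ii] := eqVneq i i'.
    subst i'; have [jj|jj] := eqVneq j j'.
      subst j'; exfalso; apply: nm.
      by rewrite -(Cantor.cancel_to_of n) -(Cantor.cancel_to_of m) E1 E2.
    apply: (@subset_measure0 _ _ _ P _ (A2 i j `&` A2 i j')).
    - by apply: measurableI.
    - by apply: measurableI; exact: (part_meas (p2 _)).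
    - by move=> t [[_ a] [_ b]].
    - by case: (p2 i) => _ [h _]; apply: h; apply/eqP.
  apply: (@subset_measure0 _ _ _ P _ (A1 i `&` A1 i')).
  - by apply: measurableI.
  - by apply: measurableI; exact: (part_meas p1).
  - by move=> t [[a _] [b _]].
  - by case: p1 => _ [h _]; apply: h; apply/eqP.
- apply: filterS (aeI (part_cover p1) (ae_nat (fun i => part_cover (p2 i)))).
  move=> t [[i Ai] h]; have [j Aj] := h i.
  exists (Cantor.to_nat (i, j)); rewrite /pc Cantor.cancel_of_to /=; by split.
Qed.

Lemma directed U1 U2 : Bs U1 -> Bs U2 -> exists2 U3, Bs U3 & U3 `<=` U1 `&` U2.
Proof.
move=> /baseP [F1 [A1 [e1 [p1 f1 s1 he1 ->]]]] /baseP [F2 [A2 [e2 [p2 f2 s2 he2 ->]]]].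
pose C := pc A1 (fun _ => A2).
have pC : Defs.partition P C by apply: part_pair.
pose F3 n := F1 (Cantor.of_nat n).1 `|` F2 (Cantor.of_nat n).2.
have f3 : finF F3.
  move=> n; split; first by rewrite finite_setU; split; [exact: (f1 _).1 | exact: (f2 _).1].
  by have [x hx] := (f1 (Cantor.of_nat n).1).2; exists x; left.
have s3 : forall n, F3 n `<=` dual tau by move=> n mu [h|h]; [exact: s1 h | exact: s2 h].
pose e3 := cls P (fun t => Num.min (rep e1 t) (rep e2 t)).
have re3 : ae (fun t => rep e3 t = Num.min (rep e1 t) (rep e2 t)) by apply: rep_cls; meas.
have he3 : L0lt (L0zero P) e3.
  apply: pos_intro; apply: filterS (aeI re3 (aeI (pos_rep he1) (pos_rep he2))).
  by move=> t [-> [a b]]; rewrite lt_min a b.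
exists (Uweak F3 C e3); first exact: base_intro.
move=> z /(Uw_elim pC f3) [h [bh lh]]; split.
- apply: (@Uw_intro _ _ _ _ _ _ _ _ _ h) => //.
    move=> i; apply: filterS (aeI (ae_nat bh) (part_cover p2)).
    move=> t [H [j Aj]] Ai mu Fmu; have := H (Cantor.to_nat (i, j)).
    rewrite /C /pc /F3 Cantor.cancel_of_to /=; apply => //; by left.
  apply: filterS (aeI lh re3) => t [a b]; apply: lt_le_trans a _.
  by rewrite b ge_min lexx.
- apply: (@Uw_intro _ _ _ _ _ _ _ _ _ h) => //.
    move=> j; apply: filterS (aeI (ae_nat bh) (part_cover p1)).
    move=> t [H [i Ai]] Aj mu Fmu; have := H (Cantor.to_nat (i, j)).
    rewrite /C /pc /F3 Cantor.cancel_of_to /=; apply => //; by right.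
  apply: filterS (aeI lh re3) => t [a b]; apply: lt_le_trans a _.
  by rewrite b ge_min lexx orbT.
Qed.


Lemma addr0E (x : M) : eadd x (e0 M) = x.
Proof. by rewrite eaddC eadd0. Qed.

Lemma addACA (x y u v : M) : eadd (eadd x u) (eadd y v) = eadd (eadd x y) (eadd u v).
Proof.
rewrite -!eaddA; congr (eadd x _); rewrite !eaddA; congr (eadd _ v); exact: eaddC.
Qed.

Lemma add_cancel (a b : M) : eadd a (eadd b (eopp a)) = b.
Proof. by rewrite eaddC -eaddA eaddN addr0E. Qed.

Lemma base_ex : tau setT -> exists U, Bs U.
Proof.
move=> tT.
pose A := fun k : nat => if k is 0 then [set: T] else set0.
have pA : Defs.partition P A.
  apply: part_intro.
  - by case => [|k]; [exact: measurableT | exact: measurable0].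
  - move=> [|i] [|j] ij //=; rewrite ?set0I ?setI0 ?measure0 //.
  - by apply: aeT => t; exists 0%N.
pose z : M -> L0 := fun _ => L0zero P.
have dz : dual tau z.
  split; [|split].
  - move=> x y; apply: L0_ext; apply: filterS (aeI (@rep_zero _ _ _ P) (rep_add (L0zero P) (L0zero P))).
    by move=> t [a b]; rewrite /z b a addr0.
  - move=> r x; apply: L0_ext; apply: filterS (aeI (@rep_zero _ _ _ P) (rep_mul r (L0zero P))).
    by move=> t [a b]; rewrite /z b a mulr0.
  - move=> x N [e [he sN]]; exists setT; split; [done|split => // y _ /=]; apply: sN.
    rewrite /L0le; apply: filterS (aeI (pos_rep he) (aeI (rep_abs (L0add (L0zero P) (L0opp (L0zero P))))
      (aeI (rep_add (L0zero P) (L0opp (L0zero P))) (aeI (rep_opp (L0zero P)) (@rep_zero _ _ _ P))))).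
    by move=> t [h1 [-> [-> [-> ->]]]]; rewrite oppr0 addr0 normr0 ltW.
exists (Uweak (fun _ => [set z]) A (L0one P)); apply: base_intro => //.
- by move=> k; split; [exact: finite_set1 | exists z].
- by move=> k mu ->.
- apply: pos_intro; apply: filterS (@rep_one _ _ _ P) => t ->; exact: ltr01.
Qed.

Definition sig : set (set M) :=
  [set O | forall z, O z -> exists2 U, Bs U & forall u, U u -> O (eadd z u)].

Lemma nbhd_sig x N : nbhd sig x N <-> exists2 U, Bs U & forall u, U u -> N (eadd x u).
Proof.
split.
  move=> [Op [oO [Ox ON]]]; have [U bU hU] := oO x Ox.
  by exists U => // u Uu; apply: ON; apply: hU.
move=> [U bU hU].
exists [set z | exists2 U, Bs U & forall u, U u -> N (eadd z u)]; split; [|split].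
- move=> z [U' bU' hU']; have [V bV hV] := half bU'.
  exists V => // v Vv; exists V => // w Vw.
  by rewrite -eaddA; apply: hU'; apply: hV.
- by exists U.
- move=> z [U' bU' hU']; rewrite -(addr0E z); apply: hU'; exact: zero_in.
Qed.

Lemma sig_top : tau setT -> is_topology sig.
Proof.
move=> tT; split; [|split].
- move=> z _; have [U bU] := base_ex tT; by exists U.
- move=> G sG z [Op GO Oz]; have [U bU hU] := sG Op GO z Oz.
  by exists U => // u Uu; exists Op => //; apply: hU.
- move=> U V oU oV z [Uz Vz]; have [U1 b1 h1] := oU z Uz; have [U2 b2 h2] := oV z Vz.
  have [U3 b3 s3] := directed b1 b2.
  by exists U3 => // u u3; have [a b] := s3 u u3; split; [apply: h1 | apply: h2].
Qed.

Lemma sig_add x y W : nbhd sig (eadd x y) W ->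
  exists U V, nbhd sig x U /\ nbhd sig y V /\ forall u v, U u -> V v -> W (eadd u v).
Proof.
move=> /nbhd_sig [U bU hU]; have [V bV hV] := half bU.
exists [set a | exists2 v, V v & a = eadd x v], [set a | exists2 v, V v & a = eadd y v].
split; [|split].
- by apply/nbhd_sig; exists V => // v Vv; exists v.
- by apply/nbhd_sig; exists V => // v Vv; exists v.
- move=> _ _ [v1 V1 ->] [v2 V2 ->]; rewrite addACA; apply: hU; exact: hV.
Qed.


Lemma sig_smul r x W : nbhd sig (esmul r x) W ->
  exists N V, L0nbhd r N /\ nbhd sig x V /\ forall s z, N s -> V z -> W (esmul s z).
Proof.
move=> /nbhd_sig [U bU hU].
have [F [A [eps [pA fF sF he eU]]]] := baseP bU; subst U.
have [G bG] := gauge_ex x pA fF.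
pose delta := cls P (fun t => Num.min 1 (rep eps t / (2 * (Num.max (rep G t) 0 + 1)))).
have rde : ae (fun t => rep delta t = Num.min 1 (rep eps t / (2 * (Num.max (rep G t) 0 + 1)))).
  by apply: rep_cls; meas.
pose eta := cls P (fun t => rep eps t / (2 * (`|rep r t| + 2))).
have reta : ae (fun t => rep eta t = rep eps t / (2 * (`|rep r t| + 2))).
  by apply: rep_cls; meas.
have hde : L0lt (L0zero P) delta.
  apply: pos_intro; apply: filterS (aeI rde (pos_rep he)) => t [-> h].
  rewrite lt_min ltr01 /= divr_gt0 //.
  have : 0 <= Num.max (rep G t) 0 by rewrite le_max lexx orbT.
  lra.
have heta : L0lt (L0zero P) eta.
  apply: pos_intro; apply: filterS (aeI reta (pos_rep he)) => t [-> h].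
  by rewrite divr_gt0.
exists [set s | L0le (L0abs (L0add s (L0opp r))) delta].
exists [set a | exists2 v, Uweak F A eta v & a = eadd x v].
split; [|split].
- by exists delta; split.
- apply/nbhd_sig; exists (Uweak F A eta); first exact: base_intro.
  by move=> v Vv; exists v.
move=> s _ Ns [v Vv ->].
rewrite -(add_cancel (esmul r x) (esmul s (eadd x v))); apply: hU.
have [hv [bv lv]] := Uw_elim pA fF Vv.
pose h := cls P (fun t => rep delta t * Num.max (rep G t) 0 +
   (`|rep r t| + rep delta t) * Num.max (rep hv t) 0).
have rh : ae (fun t => rep h t = rep delta t * Num.max (rep G t) 0 +
   (`|rep r t| + rep delta t) * Num.max (rep hv t) 0) by apply: rep_cls; meas.
apply: (@Uw_intro _ _ _ _ _ _ _ _ _ h) => //.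
  apply: bnd_of => // k mu Fmu /dual_lin hl.
  have := aeI (lin_add (esmul s (eadd x v)) (eopp (esmul r x)) hl)
    (aeI (lin_smul s (eadd x v) hl) (aeI (lin_add x v hl) (aeI (lin_opp (esmul r x) hl)
    (aeI (lin_smul r x hl) (aeI (bG k) (aeI (bv k) (aeI Ns (aeI (rep_abs (L0add s (L0opp r)))
    (aeI (rep_add s (L0opp r)) (aeI (rep_opp r) rh)))))))))).
  apply: filterS => t [e1 [e2 [e3 [e4 [e5 [b1 [b2 [n1 [n2 [n3 [n4 e6]]]]]]]]]]] Akt.
  rewrite e1 e2 e3 e4 e5 e6.
  have hsr : `|rep s t - rep r t| <= rep delta t by rewrite -n4 -n3 -n2.
  exact: (pt_smul hsr (b1 Akt mu Fmu) (b2 Akt mu Fmu)).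

apply: filterS (aeI rh (aeI rde (aeI reta (aeI lv (pos_rep he))))).
move=> t [-> [-> [e1 [h1 h2]]]]; rewrite e1 in h1.
exact: pt_smul_lt.
Qed.


Lemma base_balanced U : Bs U -> L0balanced U.
Proof.
move=> /baseP [F [A [eps [pA fF sF he ->]]]] x lam Ux hlam.
have [h [bh lh]] := Uw_elim pA fF Ux.
apply: (@Uw_intro _ _ _ _ _ _ _ _ _ h) => //.
apply: bnd_of => // k mu Fmu /dual_lin hl.
apply: filterS (aeI (lin_smul lam x hl) (aeI (bh k) (aeI hlam (aeI (rep_abs lam) (@rep_one _ _ _ P))))).
move=> t [-> [b1 [l1 [l2 l3]]]] Akt; rewrite normrM.
rewrite l2 l3 in l1; apply: le_trans (b1 Akt mu Fmu).
by rewrite -[X in _ <= X]mul1r; apply: ler_wpM2r.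
Qed.

Lemma base_convex U : Bs U -> L0convex U.
Proof.
move=> /baseP [F [A [eps [pA fF sF he ->]]]] x y lam Ux Uy l0 l1.
have [hx [bx lx]] := Uw_elim pA fF Ux.
have [hy [by' ly]] := Uw_elim pA fF Uy.
pose h := cls P (fun t => rep lam t * rep hx t + (1 - rep lam t) * rep hy t).
have rh : ae (fun t => rep h t = rep lam t * rep hx t + (1 - rep lam t) * rep hy t).
  by apply: rep_cls; meas.
have rl : ae (fun t => rep (L0add (L0one P) (L0opp lam)) t = 1 - rep lam t).
  apply: filterS (aeI (rep_add (L0one P) (L0opp lam)) (aeI (rep_opp lam) (@rep_one _ _ _ P))).
  by move=> t [-> [-> ->]].
have l01 : ae (fun t => 0 <= rep lam t /\ rep lam t <= 1).
  apply: filterS (aeI l0 (aeI l1 (aeI (@rep_one _ _ _ P) (@rep_zero _ _ _ P)))).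
  by move=> t [a [b [c e]]]; rewrite c e in a b.
apply: (@Uw_intro _ _ _ _ _ _ _ _ _ h) => //.
  apply: bnd_of => // k mu Fmu /dual_lin hl.
  have := aeI (lin_add (esmul lam x) (esmul (L0add (L0one P) (L0opp lam)) y) hl)
    (aeI (lin_smul lam x hl) (aeI (lin_smul (L0add (L0one P) (L0opp lam)) y hl)
    (aeI rl (aeI rh (aeI l01 (aeI (bx k) (by' k))))))).
  apply: filterS => t [-> [-> [-> [-> [-> [[a b] [b1 b2]]]]]]] Akt.
  exact: pt_conv a b (b1 Akt mu Fmu) (b2 Akt mu Fmu).
apply: filterS (aeI rh (aeI l01 (aeI lx ly))) => t [-> [[a b] [c e]]].
exact: pt_conv_lt.
Qed.

Lemma base_absorbing U : Bs U -> L0absorbing U.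
Proof.
move=> /baseP [F [A [eps [pA fF sF he ->]]]] x.
have [G bG] := gauge_ex x pA fF.
pose lam := cls P (fun t => 2 * (Num.max (rep G t) 0 + 1) / rep eps t).
pose lam' := cls P (fun t => rep eps t / (2 * (Num.max (rep G t) 0 + 1))).
have rl : ae (fun t => rep lam t = 2 * (Num.max (rep G t) 0 + 1) / rep eps t).
  by apply: rep_cls; meas.
have rl' : ae (fun t => rep lam' t = rep eps t / (2 * (Num.max (rep G t) 0 + 1))).
  by apply: rep_cls; meas.
exists lam; split.
  apply: pos_intro; apply: filterS (aeI rl (pos_rep he)) => t [-> h].
  rewrite divr_gt0 //; have : 0 <= Num.max (rep G t) 0 by rewrite le_max lexx orbT.
  move=> g0; lra.
exists (esmul lam' x); last first.
  rewrite -esmulA -[LHS]esmul1; congr esmul; apply: L0_ext.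
  apply: filterS (aeI (@rep_one _ _ _ P) (aeI (rep_mul lam lam') (aeI rl (aeI rl' (pos_rep he))))).
  by move=> t [-> [-> [-> [-> h]]]]; rewrite pt_inv1.
pose h := cls P (fun t => rep lam' t * Num.max (rep G t) 0).
have rh : ae (fun t => rep h t = rep lam' t * Num.max (rep G t) 0) by apply: rep_cls; meas.
apply: (@Uw_intro _ _ _ _ _ _ _ _ _ h) => //.
  apply: bnd_of => // k mu Fmu /dual_lin hl.
  apply: filterS (aeI (lin_smul lam' x hl) (aeI rh (aeI (bG k) (aeI rl' (pos_rep he))))).
  move=> t [-> [-> [b1 [e1 h1]]]] Akt; rewrite normrM.
  have p : 0 <= rep lam' t.
    rewrite e1 divr_ge0 //; first exact: ltW.
    have : 0 <= Num.max (rep G t) 0 by rewrite le_max lexx orbT.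
    move=> g0; lra.
  rewrite (ger0_norm p); apply: ler_wpM2l => //.
  by apply: le_trans (b1 Akt mu Fmu) _; rewrite le_max lexx.
apply: filterS (aeI rh (aeI rl' (pos_rep he))) => t [-> [-> h1]].
exact: pt_abs_lt.
Qed.


Lemma concatE_mu (A : nat -> set T) (x : nat -> M) z mu : Defs.partition P A ->
  concatE A x z -> lin mu ->
  ae (fun t => forall k, A k t -> rep (mu z) t = rep (mu (x k)) t).
Proof.
move=> pA hc hl; apply: ae_nat => k.
have e := f_equal (fun a => rep (mu a)) (hc k); simpl in e.
have := aeI (lin_smul (L0ind P (A k)) z hl) (aeI (lin_smul (L0ind P (A k)) (x k) hl)
  (rep_ind P (part_meas pA k))).
apply: filterS => t [h1 [h2 h3]] Akt; move: h1 h2; rewrite e => -> ; rewrite h3 indic_in // !mul1r.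
by move=> ->.
Qed.

Lemma base_stable U : Bs U -> stable_set U.
Proof.
move=> /baseP [F [A [eps [pA fF sF he ->]]]] B x z pB Ux hc.
have H : forall k, exists h : L0, bnd F A (x k) (rep h) /\ L0lt h eps.
  by move=> k; apply: Uw_elim.
pose hk k := proj1_sig (cid (H k)).
have hkP : forall k, bnd F A (x k) (rep (hk k)) /\ L0lt (hk k) eps.
  by move=> k; rewrite /hk; case: cid.
have [y hy] := concat_ex hk pB.
apply: (@Uw_intro _ _ _ _ _ _ _ _ _ y) => //.
  apply: bnd_of => // j mu Fmu /dual_lin hl.
  apply: filterS (aeI (part_cover pB) (aeI (concat_char pB hy) (aeI (concatE_mu pB hc hl)
    (ae_nat (fun k => (hkP k).1 j))))).
  move=> t [[k Bk] [e1 [e2 b]]] Ajt.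
  by rewrite (e1 k Bk) (e2 k Bk); apply: b.
apply: filterS (aeI (part_cover pB) (aeI (concat_char pB hy) (ae_nat (fun k => (hkP k).2)))).
by move=> t [[k Bk] [e1 b]]; rewrite (e1 k Bk); apply: b.
Qed.

Lemma base_concat A S : Defs.partition P A -> (forall k, Bs (S k)) ->
  Bs (concat_sets A S).
Proof.
move=> pA bS.
have : forall k, exists p : (nat -> set (M -> L0)) * (nat -> set T) * L0,
  [/\ Defs.partition P p.1.2, finF p.1.1,
  (forall j, p.1.1 j `<=` dual tau), L0lt (L0zero P) p.2 & S k = Uweak p.1.1 p.1.2 p.2].
  move=> k; have [F1 [A1 [e1 h1]]] := baseP (bS k); by exists (F1, A1, e1).
case/choice => f HP0.
pose F' k := (f k).1.1; pose A' k := (f k).1.2; pose e' k := (f k).2.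
have HP : forall k, [/\ Defs.partition P (A' k), finF (F' k),
  (forall j, F' k j `<=` dual tau), L0lt (L0zero P) (e' k) & S k = Uweak (F' k) (A' k) (e' k)].
  exact: HP0.
have pA' : forall k, Defs.partition P (A' k) by move=> k; case: (HP k).
have fF' : forall k, finF (F' k) by move=> k; case: (HP k).
have sF' : forall k j, F' k j `<=` dual tau by move=> k; case: (HP k).
have he' : forall k, L0lt (L0zero P) (e' k) by move=> k; case: (HP k).
have eS : forall k, S k = Uweak (F' k) (A' k) (e' k) by move=> k; case: (HP k).
pose C := pc A A'.
have pC : Defs.partition P C by apply: part_pair.
pose F n := F' (Cantor.of_nat n).1 (Cantor.of_nat n).2.
have fF : finF F by move=> n; apply: fF'.
have sF : forall n, F n `<=` dual tau by move=> n; apply: sF'.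
have [eps heps] := concat_ex e' pA.
have ce := concat_char pA heps.
have he : L0lt (L0zero P) eps.
  apply: pos_intro; apply: filterS (aeI (part_cover pA) (aeI ce (ae_nat (fun k => pos_rep (he' k))))).
  by move=> t [[k Ak] [e1 b]]; rewrite (e1 k Ak); apply: b.
suff -> : concat_sets A S = Uweak F C eps by apply: base_intro.
apply/seteqP; split.
- move=> z [x [Sx hc]].
  have H2 : forall k, exists h : L0, bnd (F' k) (A' k) (x k) (rep h) /\ L0lt h (e' k).
    by move=> k; apply: Uw_elim => //; rewrite -eS.
  pose hk k := proj1_sig (cid (H2 k)).
  have hkP : forall k, bnd (F' k) (A' k) (x k) (rep (hk k)) /\ L0lt (hk k) (e' k).
    by move=> k; rewrite /hk; case: cid.
  have [h hh] := concat_ex hk pA.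
  apply: (@Uw_intro _ _ _ _ _ _ _ _ _ h) => //.
    apply: bnd_of => // n mu Fmu /dual_lin hl.
    case En : (Cantor.of_nat n) => [i j].
    apply: filterS (aeI (concat_char pA hh) (aeI (concatE_mu pA hc hl) ((hkP i).1 j))).
    move=> t [e1 [e2 b]]; rewrite /C /pc En /= => -[Ai Aij].
    rewrite (e1 i Ai) (e2 i Ai); apply: b => //.
    by move: Fmu; rewrite /F En.
  apply: filterS (aeI (part_cover pA) (aeI (concat_char pA hh) (aeI ce (ae_nat (fun k => (hkP k).2))))).
  by move=> t [[k Ak] [e1 [e2 b]]]; rewrite (e1 k Ak) (e2 k Ak); apply: b.
- move=> z Uz; have [hz [bz lz]] := Uw_elim pC fF Uz.
  exists (fun k => esmul (L0ind P (A k)) z); split; last first.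
    move=> k /=; rewrite -esmulA; congr esmul; apply: L0_ext.
    apply: filterS (aeI (rep_mul (L0ind P (A k)) (L0ind P (A k))) (rep_ind P (part_meas pA k))).
    move=> t [-> ->]; have [Ak|nAk] := pselect (A k t).
      by rewrite indic_in // mulr1.
    by rewrite indic_out // mulr0.
  move=> k; rewrite eS.
  pose h := cls P (fun t => \1_(A k) t * rep hz t).
  have rh : ae (fun t => rep h t = \1_(A k) t * rep hz t).
    by apply: rep_cls; meas; exact: (part_meas pA).
  apply: (@Uw_intro _ _ _ _ _ _ _ _ _ h) => //.
    apply: bnd_of => // j mu Fmu /dual_lin hl.
    have := bz (Cantor.to_nat (k, j)).
    rewrite /C /pc /F Cantor.cancel_of_to /= => bkj.
    apply: filterS (aeI bkj (aeI rh (aeI (lin_smul (L0ind P (A k)) z hl) (rep_ind P (part_meas pA k))))).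
    move=> t [b [-> [-> ->]]] Akj.
    have [Ak|nAk] := pselect (A k t).
      by rewrite indic_in // !mul1r; apply: b.
    by rewrite indic_out // !mul0r normr0.
  apply: filterS (aeI rh (aeI lz (aeI ce (pos_rep (he' k))))).
  move=> t [-> [l1 [e1 p]]]; have [Ak|nAk] := pselect (A k t).
    by rewrite indic_in // mul1r -(e1 k Ak).
  by rewrite indic_out // mul0r.
Qed.

End Top.

Lemma nbhd_base_sig (d : measure_display) (T : measurableType d)
  (R : realType) (P : probability T R) (M : L0module P) (tau : set (set M)) :
  nbhd_base (sig tau) (e0 M) (weak_base tau).
Proof.
split.
  move=> U bU; apply/nbhd_sig; exists U => // u Uu; by rewrite eadd0.
move=> N /nbhd_sig [U bU hU]; exists U => // u Uu; rewrite -(eadd0 u); exact: hU.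
Qed.

Theorem mainTheorem3 (d : measure_display) (T : measurableType d)
  (R : realType) (P : probability T R) (M : L0module P)
  (tau : set (set (Ecar M))) :
  stable_locally_L0convex tau ->
  exists sigma : set (set (Ecar M)),
    stable_locally_L0convex sigma /\ nbhd_base sigma (e0 M) (weak_base tau).
Proof.
move=> [[htop _] [hccp _]].
have tT : tau setT by case: htop.
exists (sig tau); split; last exact: nbhd_base_sig.
split; [split; [exact: sig_top | split; [exact: sig_add | exact: sig_smul]] | split => //].
exists (weak_base tau); split; first exact: nbhd_base_sig.
split; first (rewrite /stable_collection; split).
- by move=> U bU; exact: (base_stable bU).
- by move=> A S pA bS; exact: (base_concat pA bS).
- move=> U bU; split; [exact: (base_convex bU) | exact: (base_absorbing bU) | exact: (base_balanced bU)].
Qed.
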